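(* Assume condition (H). Then for all integers $0\le m\le n$ we have $d_{m,n}\le d_{m-1,n}$, and for all integers $-1\le m\le n$ we have $d_{m,n}\le d_{m,n+1}$. That is, in the region $m\le n$, $d_{m,n}$ is non-increasing in $m$ and non-decreasing in $n$.
   Context: Let $\mathbb{N}=\{0,1,2,\dots\}$. Fix a sequence $(\pi^n)_{n\in\mathbb{N}}$ where each $\pi^n=(\pi^n_i)_{i\in\mathbb{N}}$ is a probability distribution on $\mathbb{N}$ with support contained in $\{0,\dots,n\}$, and $\pi^n\ne\pi^m$ for $m\ne n$. Define reals $d_{m,n}$ for $m,n\in\mathbb{N}\cup\{-1\}$ recursively as follows: $d_{-1,-1}=0$, $d_{-1,j}=d_{j,-1}=1$ for $j\in\mathbb{N}$, and for $m,n\in\mathbb{N}$, $$d_{m,n}=\min_{z\in\mathcal{F}_{m,n}}\sum_{i=0}^m\sum_{j=0}^n z_{i,j}\,d_{i-1,j-1},$$ where $\mathcal{F}_{m,n}$ is the set of arrays $z=(z_{i,j})_{0\le i\le m,\,0\le j\le n}$ with $z_{i,j}\ge0$, $\sum_{j=0}^n z_{i,j}=\pi^m_i$ for all $i\le m$, and $\sum_{i=0}^m z_{i,j}=\pi^n_j$ for all $j\le n$. Condition (H) means: for every $n\ge1$, $\pi^n_n>0$ and $0\le\pi^n_i\le\pi^{n-1}_i$ for all $i<n$. *)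

(* Defs.v *)
From HB Require Import structures.
From mathcomp Require Import all_boot all_order all_algebra.
From mathcomp Require Import reals.
Set Implicit Arguments. Unset Strict Implicit. Unset Printing Implicit Defensive.
Import Order.TTheory GRing.Theory Num.Theory.
Local Open Scope ring_scope.

(* pi n i  stands for  pi^n_i. *)

Definition prob_seq (R : realType) (pi : nat -> nat -> R) : Prop :=
  forall n : nat,
    (forall i : nat, 0 <= pi n i) /\
    (forall i : nat, (n < i)%N -> pi n i = 0) /\
    \sum_(i < n.+1) pi n i = 1.

Definition pairwise_distinct (R : realType) (pi : nat -> nat -> R) : Prop :=
  forall m n : nat, m <> n -> pi m <> pi n.

Definition condH (R : realType) (pi : nat -> nat -> R) : Prop :=
  forall n : nat, (1 <= n)%N ->
    0 < pi n n /\ (forall i : nat, (i < n)%N -> 0 <= pi n i <= pi n.-1 i).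

Definition coupling (R : realType) (pi : nat -> nat -> R) (m n : nat)
    (z : 'M[R]_(m.+1, n.+1)) : Prop :=
  (forall i j, 0 <= z i j) /\
  (forall i : 'I_m.+1, \sum_(j < n.+1) z i j = pi m i) /\
  (forall j : 'I_n.+1, \sum_(i < m.+1) z i j = pi n j).

(* Shifted indexing: D a b  stands for  d_{a-1,b-1}, for a b : nat
   (so D 0 0 = d_{-1,-1}, D (m+1) (n+1) = d_{m,n}). *)

Definition cost (R : realType) (D : nat -> nat -> R) (m n : nat)
    (z : 'M[R]_(m.+1, n.+1)) : R :=
  \sum_(i < m.+1) \sum_(j < n.+1) z i j * D i j.

Definition is_d (R : realType) (pi : nat -> nat -> R) (D : nat -> nat -> R) : Prop :=
  D 0%N 0%N = 0 /\
  (forall j : nat, D 0%N j.+1 = 1 /\ D j.+1 0%N = 1) /\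
  (forall m n : nat,
     (exists z : 'M[R]_(m.+1, n.+1), coupling pi z /\ cost D z = D m.+1 n.+1) /\
     (forall z : 'M[R]_(m.+1, n.+1), coupling pi z -> D m.+1 n.+1 <= cost D z)).

(* Main.v *)
Require Import Defs.
From HB Require Import structures.
From mathcomp Require Import all_boot all_order all_algebra.
From mathcomp Require Import reals.
From mathcomp Require Import ring lra zify.
Import Order.TTheory GRing.Theory Num.Theory.
Local Open Scope ring_scope.
Set Implicit Arguments. Unset Strict Implicit. Unset Printing Implicit Defensive.

Definition coup (R : realType) (M N : nat) (mu nu : nat -> R) (Z : nat -> nat -> R) : Prop :=
  (forall i j, 0 <= Z i j) /\
  (forall i, (i < M)%N -> \sum_(j < N) Z i j = mu i) /\
  (forall j, (j < N)%N -> \sum_(i < M) Z i j = nu j).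

Definition costf (R : realType) (M N : nat) (f : nat -> nat -> R) (Z : nat -> nat -> R) : R :=
  \sum_(i < M) \sum_(j < N) Z i j * f i j.

Lemma sumD1n (R : realType) (N j : nat) (F : nat -> R) : (j < N)%N ->
  \sum_(l < N) F l = F j + \sum_(l < N | (l : nat) != j) F l.
Proof.
move=> hj; rewrite (bigD1 (Ordinal hj)) //=; congr (_ + _).
Qed.

Lemma sum_pick (R : realType) (N j : nat) (a : R) : (j < N)%N ->
  \sum_(l < N) (if (l : nat) == j then a else 0) = a.
Proof.
move=> hj; rewrite (sumD1n (fun l => if l == j then a else 0) hj) /= eqxx big1 ?addr0 // => l /negbTE -> //.
Qed.

Lemma sum_le_term (R : realType) (M j : nat) (F : nat -> R) (P : pred nat) :
  (forall k, 0 <= F k) -> (j < M)%N -> P j ->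
  F j <= \sum_(k < M | P k) F k.
Proof.
move=> F0 hj Pj; rewrite (bigD1 (Ordinal hj)) //= lerDl.
by apply: sumr_ge0 => i _.
Qed.

Definition dfZ (R : realType) (mu nu : nat -> R) (Z : nat -> nat -> R) (j : nat) :
  nat -> nat -> R :=
  fun k l => if l == j then (if k == j then nu j else 0)
             else if k == j then (1 - (nu j - Z j j) / (mu j - Z j j)) * Z j l
             else Z k l + Z k j * Z j l / (mu j - Z j j).

Lemma df_step (R : realType) M N (mu nu : nat -> R) Z (f : nat -> nat -> R) j :
  coup M N mu nu Z -> (j < M)%N -> (j < N)%N -> nu j <= mu j ->
  (forall k l, 0 <= f k l) -> f j j = 0 ->
  (forall k l, (k < M)%N -> (l < N)%N -> f k l <= f k j + f j l) ->
  exists Z', coup M N mu nu Z' /\ costf M N f Z' <= costf M N f Z /\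
    (forall k, k != j -> Z' k j = 0) /\
    (forall k l, l != j -> Z j l = 0 -> Z' k l = Z k l).
Proof.
case=> [Z0 [Zr Zc]] hjM hjN hnm f0 fjj tri.
have hu : \sum_(l < N | (l:nat) != j) Z j l = mu j - Z j j.
  by have := Zr j hjM; rewrite (sumD1n (Z j) hjN) => <-; rewrite addrAC subrr add0r.
have hg : \sum_(k < M | (k:nat) != j) Z k j = nu j - Z j j.
  by have := Zc j hjN; rewrite (sumD1n (Z^~ j) hjM) => <-; rewrite addrAC subrr add0r.
set u := mu j - Z j j in hu *.
set g := nu j - Z j j in hg *.
set t := g / u.
have g0 : 0 <= g by rewrite -hg; apply: sumr_ge0.
have gu : g <= u by rewrite /g /u lerD2r.
have u0 : 0 <= u by apply: le_trans gu.
have Zkj : forall k, (k < M)%N -> k != j -> Z k j <= g.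
  by move=> k hk kj; rewrite -hg; apply: (sum_le_term (F := Z^~ j) (P := fun k : nat => k != j)) => //.
have Zkjuu : forall k, (k < M)%N -> k != j -> Z k j / u * u = Z k j.
  move=> k hk kj; have [u0'|un0] := eqVneq u 0; last by rewrite divfK.
  have h1 := Zkj k hk kj; have h2 := Z0 k j; rewrite u0' in gu.
  have -> : Z k j = 0 by lra.
  by rewrite !mul0r.
have tu : t * u = g.
  have [u0'|un0] := eqVneq u 0; last by rewrite /t divfK.
  rewrite u0' mulr0; rewrite u0' in gu; lra.
have t1 : 0 <= 1 - t.
  rewrite subr_ge0 /t; have [->|un0] := eqVneq u 0; first by rewrite invr0 mulr0.
  by rewrite ler_pdivrMr ?mul1r // lt_def un0 u0.
exists (dfZ mu nu Z j); split; [split; [|split] | split; [|split]].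
- move=> k l; rewrite /dfZ -/u -/g -/t.
  case: eqP => _; first by case: eqP => _ //; rewrite -(Zc j hjN); apply: sumr_ge0.
  case: eqP => _; first by apply: mulr_ge0.
  by apply: addr_ge0 => //; apply: divr_ge0 => //; apply: mulr_ge0.
- move=> k hk.
  rewrite (sumD1n (dfZ mu nu Z j k) hjN) {1}/dfZ eqxx.
  have [->|kj] := eqVneq k j.
    rewrite ?eqxx (eq_bigr (fun l : 'I_N => (1 - t) * Z j l)); last first.
      by move=> l /negbTE lj; rewrite /dfZ lj eqxx.
    rewrite -big_distrr hu /= mulrBl mul1r tu /g /u; ring.
  rewrite add0r.
  rewrite (eq_bigr (fun l : 'I_N => Z k l + Z k j / u * Z j l)); last first.
    by move=> l /negbTE lj; rewrite /dfZ lj (negbTE kj) mulrAC.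
  rewrite big_split /= -big_distrr /= hu Zkjuu //.
  by have := Zr k hk; rewrite (sumD1n (Z k) hjN) => <-; rewrite addrC.
- move=> l hl.
  have [->|lj] := eqVneq l j.
    rewrite (eq_bigr (fun k : 'I_M => if (k : nat) == j then nu j else 0)).
      by rewrite sum_pick.
    by move=> k _; rewrite /dfZ eqxx.
  rewrite (sumD1n (fun k => dfZ mu nu Z j k l) hjM) /= {1}/dfZ (negbTE lj) eqxx.
  rewrite (eq_bigr (fun k : 'I_M => Z k l + Z k j * Z j l / u)); last first.
    by move=> k /negbTE kj; rewrite /dfZ (negbTE lj) kj.
  rewrite big_split /= -big_distrl -big_distrl /= hg.
  have := Zc l hl; rewrite (sumD1n (Z^~ l) hjM) => <-.
  rewrite -/u -/g -/t /t; ring.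
- pose A := \sum_(k < M | (k:nat) != j) Z k j * f k j.
  pose B := \sum_(l < N | (l:nat) != j) Z j l * f j l.
  pose C := \sum_(k < M | (k:nat) != j) \sum_(l < N | (l:nat) != j) Z k l * f k l.
  pose P := \sum_(k < M | (k:nat) != j) \sum_(l < N | (l:nat) != j) Z k j * Z j l / u * f k l.
  have eZ : costf M N f Z = A + B + C.
    rewrite /costf (eq_bigr (fun k : 'I_M => Z k j * f k j + \sum_(l < N | (l:nat) != j) Z k l * f k l)); last first.
      by move=> k _; rewrite (sumD1n (fun l => Z k l * f k l) hjN).
    rewrite big_split /= (sumD1n (fun k => Z k j * f k j) hjM).
    rewrite (sumD1n (fun k => \sum_(l < N | (l:nat) != j) Z k l * f k l) hjM) /= fjj mulr0 add0r.
    by rewrite /A /B /C addrA.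
  have eZ' : costf M N f (dfZ mu nu Z j) = (1 - t) * B + C + P.
    rewrite /costf (eq_bigr (fun k : 'I_M => \sum_(l < N | (l:nat) != j) dfZ mu nu Z j k l * f k l)); last first.
      move=> k _; rewrite (sumD1n (fun l => dfZ mu nu Z j k l * f k l) hjN) /= {1}/dfZ eqxx.
      by case: eqP => [->|_]; rewrite ?fjj ?mulr0 ?mul0r add0r.
    rewrite (sumD1n (fun k => \sum_(l < N | (l:nat) != j) dfZ mu nu Z j k l * f k l) hjM) /=.
    rewrite -addrA; congr (_ + _).
      rewrite /B big_distrr; apply: eq_bigr => l /negbTE lj; by rewrite /dfZ lj eqxx /t /g /u; exact: (esym (mulrA _ _ _)).
    rewrite /C /P -big_split; apply: eq_bigr => k /negbTE kj.
    rewrite -big_split; apply: eq_bigr => l /negbTE lj.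
    by rewrite /dfZ lj kj -/u mulrDl.
  have hP : P <= A + t * B.
    have h1 : P <= \sum_(k < M | (k:nat) != j) \sum_(l < N | (l:nat) != j)
                 (Z k j * Z j l / u * f k j + Z k j * Z j l / u * f j l).
      apply: ler_sum => k _; apply: ler_sum => l _; rewrite -mulrDr.
      apply: ler_wpM2l; first by apply: divr_ge0 => //; apply: mulr_ge0.
      by apply: tri.
    apply: (le_trans h1).
    under eq_bigr => k _ do rewrite big_split.
    rewrite big_split /=; apply: lerD.
      apply: ler_sum => k kj.
      rewrite (eq_bigr (fun l : 'I_N => (Z k j / u * f k j) * Z j l)); last first.
        by move=> l _; ring.
      by rewrite -big_distrr /= hu mulrAC Zkjuu.
    rewrite exchange_big /= /B big_distrr /=; apply: ler_sum => l _.
    rewrite (eq_bigr (fun k : 'I_M => Z k j * (Z j l / u * f j l))); last by move=> k _; ring.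
    rewrite -big_distrl /= hg /t.
    suff -> : g * (Z j l / u * f j l) = g / u * (Z j l * f j l) by [].
    ring.
  rewrite eZ eZ' mulrBl mul1r; lra.
- by move=> k /negbTE kj; rewrite /dfZ eqxx kj.
- move=> k l /negbTE lj Zjl; rewrite /dfZ lj Zjl !mulr0 !mul0r addr0.
  by case: eqP => // ->.
Qed.

Lemma df_all (R : realType) M N (mu nu : nat -> R) Z (f : nat -> nat -> R) s :
  coup M N mu nu Z -> (s <= M)%N -> (s <= N)%N -> (forall j, (j < s)%N -> nu j <= mu j) ->
  (forall k l, 0 <= f k l) -> (forall j, (j < s)%N -> f j j = 0) ->
  (forall k l j, (k < M)%N -> (l < N)%N -> (j < s)%N -> f k l <= f k j + f j l) ->
  exists Z', coup M N mu nu Z' /\ costf M N f Z' <= costf M N f Z /\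
    (forall j k, (j < s)%N -> k != j -> Z' k j = 0).
Proof.
move=> cZ; elim: s => [|s IH] hsM hsN hnm f0 fjj tri.
  by exists Z; split => //; split => //.
have [Z1 [c1 [k1 cl1]]] := IH (ltnW hsM) (ltnW hsN) (fun j hj => hnm j (ltnW hj)) f0
   (fun j hj => fjj j (ltnW hj)) (fun k l j hk hl hj => tri k l j hk hl (ltnW hj)).
have [Z2 [c2 [k2 [cl2 pr2]]]] := df_step c1 hsM hsN (hnm s (ltnSn s)) f0 (fjj s (ltnSn s))
   (fun k l hk hl => tri k l s hk hl (ltnSn s)).
exists Z2; split => //; split; first exact: le_trans k2 k1.
move=> j k; rewrite ltnS leq_eqVlt => /orP [/eqP ->|hj] kj; first exact: cl2.
have js : j != s by rewrite neq_ltn hj.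
rewrite pr2 //; first exact: cl1.
by apply: cl1 => //; rewrite eq_sym.
Qed.

Lemma coup_ext (R : realType) M N (mu nu mu' nu' : nat -> R) Z :
  (forall i, (i < M)%N -> mu i = mu' i) -> (forall j, (j < N)%N -> nu j = nu' j) ->
  coup M N mu nu Z -> coup M N mu' nu' Z.
Proof.
move=> em en [Z0 [Zr Zc]]; split => //; split => [i hi|j hj].
  by rewrite Zr // em.
by rewrite Zc // en.
Qed.

Lemma sum0_term (R : realType) M (F : nat -> R) i :
  (forall k, 0 <= F k) -> \sum_(k < M) F k = 0 -> (i < M)%N -> F i = 0.
Proof.
move=> F0 s0 hi; apply/eqP; rewrite eq_le F0 andbT.
by rewrite -s0 (sum_le_term (P := predT)).
Qed.

Lemma divKeq (R : realType) (a T : R) : (T = 0 -> a = 0) -> a / T * T = a.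
Proof.
move=> h; have [T0|Tn0] := eqVneq T 0; last by rewrite divfK.
by rewrite (h T0) !mul0r.
Qed.

(* column merge: the last column q is spread on the others *)
Lemma opB2 (R : realType) M q (mu nu rho : nat -> R) Z (f : nat -> nat -> R) :
  coup M q.+1 mu nu Z -> (forall j, (j < q)%N -> nu j <= rho j) ->
  \sum_(j < q) rho j = \sum_(j < q.+1) nu j ->
  (forall k l, 0 <= f k l) ->
  (forall i j, (i < M)%N -> (j < q)%N -> nu j != rho j -> f i j <= f i q) ->
  exists Z', coup M q mu rho Z' /\ costf M q f Z' <= costf M q.+1 f Z.
Proof.
case=> [Z0 [Zr Zc]] nr bal f0 fle.
pose T := nu q.
pose w j := if (j < q)%N then rho j - nu j else 0.
have wsum : \sum_(j < q) w j = T.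
  rewrite (eq_bigr (fun j : 'I_q => rho j - nu j)); last by move=> j _; rewrite /w ltn_ord.
  by rewrite sumrB bal big_ord_recr /= /T addrAC subrr add0r.
have w0 : forall j, 0 <= w j by move=> j; rewrite /w; case: ifP => // /nr; rewrite subr_ge0.
have T0w : T = 0 -> forall j, w j = 0.
  move=> hT j; case hj: (j < q)%N; last by rewrite /w hj.
  by apply: (sum0_term (M := q) (F := w)) => //; rewrite wsum.
have T0Z : T = 0 -> forall i, (i < M)%N -> Z i q = 0.
  move=> hT i hi; apply: (sum0_term (M := M) (F := fun i => Z i q)) => //.
  by rewrite Zc.
exists (fun i j => Z i j + Z i q * w j / T); split; first split; [|split|].
- move=> i j; apply: addr_ge0 => //.
  by apply: divr_ge0; [apply: mulr_ge0|rewrite /T -(Zc q (ltnSn q)); apply: sumr_ge0].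
- move=> i hi; rewrite big_split /=.
  rewrite [X in _ + X](eq_bigr (fun j : 'I_q => (Z i q / T) * w j)); last by move=> j _; ring.
  rewrite -big_distrr /= wsum divKeq; last by move=> /T0Z; apply.
  by rewrite -(Zr i hi) big_ord_recr.
- move=> j hj; rewrite big_split /= Zc ?(ltn_trans hj) //.
  rewrite [X in _ + X](eq_bigr (fun i : 'I_M => (w j / T) * Z i q)); last by move=> i _; ring.
  rewrite -big_distrr /= Zc // divKeq; last by move/T0w; apply.
  by rewrite /w hj addrC subrK.
- rewrite /costf; apply: ler_sum => i _; rewrite big_ord_recr /=.
  under eq_bigr do rewrite mulrDl.
  rewrite big_split /= lerD2l.
  apply: (le_trans (y := \sum_(j < q) Z i q * f i q / T * w j)).
    apply: ler_sum => j _.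
    have -> : Z i q * f i q / T * w j = Z i q * w j / T * f i q by ring.
    have [wj0|wjn0] := eqVneq (w j) 0; first by rewrite wj0 !mulr0 !mul0r.
    apply: ler_wpM2l; first by apply: divr_ge0; [apply: mulr_ge0|rewrite /T -(Zc q (ltnSn q)); apply: sumr_ge0].
    apply: fle => //.
    by move: wjn0; rewrite /w ltn_ord subr_eq0 eq_sym.
  rewrite -big_distrr /= wsum divKeq //.
  by move=> /T0Z -> //; rewrite mul0r.
Qed.

Lemma offdiag_ge (R : realType) M N (mu nu : nat -> R) Z s i :
  coup M N mu nu Z -> (s <= N)%N -> (forall j k, (j < s)%N -> k != j -> Z k j = 0) ->
  (i < s)%N -> (i < M)%N -> mu i - nu i <= \sum_(l < N | (s <= l)%N) Z i l.
Proof.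
case=> [Z0 [Zr Zc]] hsN cl his hiM.
have hiN : (i < N)%N by apply: leq_trans hsN.
rewrite -(Zr i hiM) (bigID (fun l : 'I_N => (s <= l)%N)) /=.
suff : \sum_(l < N | ~~ (s <= l)%N) Z i l <= nu i by lra.
rewrite (bigD1 (Ordinal hiN)) /=; last by rewrite -ltnNge.
rewrite big1 ?addr0; last first.
  move=> l /andP [hl lni]; apply: cl; first by rewrite ltnNge.
  by rewrite eq_sym; apply: contra lni => /eqP e; apply/eqP/val_inj.
rewrite -(Zc i hiN); exact: (sum_le_term (F := Z^~ i) (P := predT)).
Qed.

Lemma sum_pickF (R : realType) (N j : nat) (F : nat -> R) : (j < N)%N ->
  \sum_(l < N) (if (l : nat) == j then F l else 0) = F j.
Proof.
move=> hj; rewrite (sumD1n (fun l => if l == j then F l else 0) hj) /= eqxx big1 ?addr0 //.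
by move=> l /negbTE ->.
Qed.

(* row split: a new row s takes a fraction of the mass of rows < s in columns >= s *)
Lemma opA (R : realType) s N (mu nu : nat -> R) Z (f : nat -> nat -> R) (del : nat -> R) :
  coup s N mu nu Z ->
  (forall i, (i < s)%N -> 0 <= del i /\ del i <= \sum_(l < N | (s <= l)%N) Z i l) ->
  (forall k l, 0 <= f k l) ->
  (forall k j, (k < s)%N -> (s <= j)%N -> (j < N)%N -> f s j <= f k j) ->
  exists Z', coup s.+1 N (fun i => if (i < s)%N then mu i - del i else \sum_(k < s) del k) nu Z'
     /\ costf s.+1 N f Z' <= costf s N f Z.
Proof.
case=> [Z0 [Zr Zc]] hdel f0 fle.
pose o i := \sum_(l < N | (s <= l)%N) Z i l.
pose r i := del i / o i.
have o0 : forall i, 0 <= o i by move=> i; apply: sumr_ge0.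
have ro : forall i, (i < s)%N -> r i * o i = del i.
  move=> i hi; rewrite /r divKeq // => h.
  by have [h1 h2] := hdel i hi; rewrite /o in h; apply/eqP; rewrite eq_le h1 andbT -h h2.
have r0 : forall i, (i < s)%N -> 0 <= r i.
  by move=> i hi; have [h1 _] := hdel i hi; apply: divr_ge0.
have r1 : forall i, (i < s)%N -> r i <= 1.
  move=> i hi; have [h1 h2] := hdel i hi; rewrite /r.
  have [->|on0] := eqVneq (o i) 0; first by rewrite invr0 mulr0.
  by rewrite ler_pdivrMr ?mul1r // lt_def on0 o0.
pose Z' i j := if (i < s)%N then (if (s <= j)%N then (1 - r i) * Z i j else Z i j)
               else (if (s <= j)%N then \sum_(k < s) r k * Z k j else 0).
have eZ' : forall i j, (i < s)%N -> Z' i j = Z i j - (if (s <= j)%N then r i * Z i j else 0).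
  by move=> i j hi; rewrite /Z' hi; case: ifP => _; [ring|rewrite subr0].
have rowi : forall i, (i < s)%N -> \sum_(j < N) (if (s <= j)%N then r i * Z i j else 0) = del i.
  by move=> i hi; rewrite -big_mkcond /= -big_distrr /= ro.
exists Z'; split; first split; [|split|].
- move=> i j; rewrite /Z'; case: ifP => hi; case: ifP => _ //.
  + by apply: mulr_ge0 => //; rewrite subr_ge0 r1.
  + by apply: sumr_ge0 => k _; apply: mulr_ge0 => //; apply: r0.
- move=> i; rewrite ltnS leq_eqVlt => /orP [/eqP ->|hi].
    rewrite ltnn /Z' ltnn -big_mkcond /= exchange_big /=; apply: eq_bigr => k _.
    by rewrite -big_distrr /= -ro.
  rewrite hi (eq_bigr (fun j : 'I_N => Z i j - (if (s <= j)%N then r i * Z i j else 0))); last first.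
    by move=> j _; rewrite eZ'.
  by rewrite sumrB rowi // Zr.
- move=> j hj; rewrite big_ord_recr /= /Z' ltnn.
  rewrite (eq_bigr (fun i : 'I_s => if (s <= j)%N then (1 - r i) * Z i j else Z i j)); last first.
    by move=> i _; rewrite ltn_ord.
  case: ifP => _; last by rewrite addr0 Zc.
  rewrite -big_split /= -(Zc j hj); apply: eq_bigr => i _; ring.
- rewrite /costf big_ord_recr /=.
  rewrite (eq_bigr (fun i : 'I_s => \sum_(j < N) Z i j * f i j -
             \sum_(j < N | (s <= j)%N) r i * Z i j * f i j)); last first.
    move=> i _; rewrite [X in _ - X]big_mkcond /= -sumrB; apply: eq_bigr => j _.
    by rewrite eZ' ?ltn_ord //; case: ifP => _; ring.
  rewrite sumrB.
  suff : \sum_(j < N) Z' s j * f s j <= \sum_(i < s) \sum_(j < N | (s <= j)%N) r i * Z i j * f i j by lra.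
  rewrite /Z' ltnn (eq_bigr (fun j : 'I_N => if (s <= j)%N then \sum_(k < s) r k * Z k j * f s j else 0)); last first.
    by move=> j _; case: ifP => _; rewrite ?mul0r // big_distrl.
  rewrite -big_mkcond /= exchange_big /=; apply: ler_sum => k _; apply: ler_sum => j hj.
  apply: ler_wpM2l; first by apply: mulr_ge0 => //; apply: r0.
  by apply: fle.
Qed.

(* diagonal boost: row i < M moves del i of its mass in columns >= M to (i,i) *)
Lemma opB1 (R : realType) M N (mu nu : nat -> R) Z (f : nat -> nat -> R) (del : nat -> R) :
  coup M N mu nu Z -> (M <= N)%N ->
  (forall i, (i < M)%N -> 0 <= del i /\ del i <= \sum_(l < N | (M <= l)%N) Z i l) ->
  (forall k l, 0 <= f k l) -> (forall i, (i < M)%N -> f i i = 0) ->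
  exists Z1, coup M N mu (fun j => if (j < M)%N then nu j + del j
                                   else \sum_(i < M) (1 - del i / \sum_(l < N | (M <= l)%N) Z i l) * Z i j) Z1
     /\ costf M N f Z1 <= costf M N f Z.
Proof.
case=> [Z0 [Zr Zc]] hMN hdel f0 fii.
pose o i := \sum_(l < N | (M <= l)%N) Z i l.
pose r i := del i / o i.
have o0 : forall i, 0 <= o i by move=> i; apply: sumr_ge0.
have ro : forall i, (i < M)%N -> r i * o i = del i.
  move=> i hi; rewrite /r divKeq // => h.
  by have [h1 h2] := hdel i hi; rewrite /o in h; apply/eqP; rewrite eq_le h1 andbT -h h2.
have r0 : forall i, (i < M)%N -> 0 <= r i.
  by move=> i hi; have [h1 _] := hdel i hi; apply: divr_ge0.
have r1 : forall i, (i < M)%N -> r i <= 1.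
  move=> i hi; have [h1 h2] := hdel i hi; rewrite /r.
  have [->|on0] := eqVneq (o i) 0; first by rewrite invr0 mulr0.
  by rewrite ler_pdivrMr ?mul1r // lt_def on0 o0.
pose Z1 i j := if (i < M)%N then (if (M <= j)%N then (1 - r i) * Z i j else if (i == j) then Z i j + del i else Z i j) else Z i j.
have eZ1 : forall i j, (i < M)%N ->
   Z1 i j = Z i j - (if (M <= j)%N then r i * Z i j else 0) + (if j == i then del i else 0).
  move=> i j hi; rewrite /Z1 hi; case: ifP => hj.
    have -> : (j == i) = false by apply/negbTE; rewrite neq_ltn (leq_trans hi hj) orbT.
    by rewrite addr0; ring.
  case: eqP => [<-|ne]; first by rewrite eqxx subr0.
  have /negbTE -> : j != i by apply/eqP => e; apply: ne; rewrite e.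
  by rewrite subr0 addr0.
have rowi : forall i, (i < M)%N -> \sum_(j < N) (if (M <= j)%N then r i * Z i j else 0) = del i.
  by move=> i hi; rewrite -big_mkcond /= -big_distrr /= ro.
exists Z1; split; first split; [|split|].
- move=> i j; rewrite /Z1; case: ifP => hi //; case: ifP => hj.
    by apply: mulr_ge0 => //; rewrite subr_ge0 r1.
  by case: ifP => _ //; apply: addr_ge0 => //; have [] := hdel i hi.
- move=> i hi.
  rewrite (eq_bigr (fun j : 'I_N => Z i j - (if (M <= j)%N then r i * Z i j else 0) + (if (j:nat) == i then del i else 0))); last first.
    by move=> j _; rewrite eZ1.
  by rewrite big_split /= sumrB rowi // sum_pick ?(leq_trans hi hMN) // Zr // subrK.
- move=> j hj; case: ifP => hjM; last first.
    have hMj : (M <= j)%N by rewrite leqNgt hjM.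
    by apply: eq_bigr => i _; rewrite /Z1 ltn_ord hMj.
  have hMj : (M <= j)%N = false by rewrite leqNgt hjM.
  rewrite (eq_bigr (fun i : 'I_M => Z i j + (if (i:nat) == j then del i else 0))); last first.
    by move=> i _; rewrite /Z1 ltn_ord hMj; case: ifP => _; rewrite ?addr0.
  by rewrite big_split /= Zc // sum_pickF.
- rewrite /costf; apply: ler_sum => i _.
  rewrite (eq_bigr (fun j : 'I_N => Z i j * f i j - (if (M <= j)%N then r i * Z i j * f i j else 0) + (if (j:nat) == i then del i * f i j else 0))); last first.
    by move=> j _; rewrite eZ1 //; case: ifP => _; case: ifP => _; ring.
  rewrite big_split /= sumrB (@sum_pickF _ _ _ (fun l => del i * f i l) (leq_trans (ltn_ord i) hMN)) /= fii // mulr0 addr0.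
  rewrite lerBlDr lerDl -big_mkcond /=; apply: sumr_ge0 => j _.
  by apply: mulr_ge0 => //; apply: mulr_ge0 => //; apply: r0.
Qed.

Lemma coup_total (R : realType) M N (mu nu : nat -> R) Z :
  coup M N mu nu Z -> \sum_(j < N) nu j = \sum_(i < M) mu i.
Proof.
case=> [_ [Zr Zc]].
rewrite (eq_bigr (fun j : 'I_N => \sum_(i < M) Z i j)); last by move=> j _; rewrite Zc.
rewrite exchange_big /=; apply: eq_bigr => i _; by rewrite Zr.
Qed.

Lemma Dmin (R : realType) (pi D : nat -> nat -> R) : is_d pi D ->
  forall m n Z, coup m.+1 n.+1 (pi m) (pi n) Z -> D m.+1 n.+1 <= costf m.+1 n.+1 D Z.
Proof.
case=> _ [_ H] m n Z [Z0 [Zr Zc]]; have [_ Hle] := H m n.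
have -> : costf m.+1 n.+1 D Z = cost D (\matrix_(i < m.+1, j < n.+1) Z i j).
  by apply: eq_bigr => i _; apply: eq_bigr => j _; rewrite mxE.
apply: Hle; split; first by move=> i j; rewrite mxE.
split.
  by move=> i; rewrite -(Zr i (ltn_ord i)); apply: eq_bigr => j _; rewrite mxE.
by move=> j; rewrite -(Zc j (ltn_ord j)); apply: eq_bigr => i _; rewrite mxE.
Qed.

Lemma Dopt (R : realType) (pi D : nat -> nat -> R) : is_d pi D ->
  forall m n, exists Z, coup m.+1 n.+1 (pi m) (pi n) Z /\ costf m.+1 n.+1 D Z = D m.+1 n.+1.
Proof.
case=> _ [_ H] m n; have [[z [[z0 [zr zc]] ez]] _] := H m n.
exists (fun i j => if (i < m.+1)%N && (j < n.+1)%N then z (inord i) (inord j) else 0).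
split; first split; [|split|].
- by move=> i j; case: ifP.
- move=> i hi; rewrite -(inordK hi) -zr; apply: eq_bigr => j _.
  by rewrite inordK // hi ltn_ord inord_val.
- move=> j hj; rewrite -(inordK hj) -zc; apply: eq_bigr => i _.
  by rewrite inordK // hj ltn_ord inord_val.
- rewrite -ez; apply: eq_bigr => i _; apply: eq_bigr => j _.
  by rewrite !ltn_ord !inord_val.
Qed.

Lemma Dbnd (R : realType) (pi D : nat -> nat -> R) : prob_seq pi -> is_d pi D ->
  forall a b, 0 <= D a b /\ D a b <= 1.
Proof.
move=> Hp Hd; have [D00 [D0j _]] := Hd.
suff : forall N a b, (a <= N)%N -> 0 <= D a b /\ D a b <= 1 by move=> h a b; exact: (h a).
elim=> [|N IH] [|a] [|b] //= ha; rewrite ?D00 ?(D0j b).1 ?(D0j a).2 ?ler01 ?lexx //.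
have [Z [[Z0 [Zr Zc]] eZ]] := Dopt Hd a b.
rewrite -eZ /costf; split.
  apply: sumr_ge0 => i _; apply: sumr_ge0 => j _; apply: mulr_ge0 => //.
  by have [] := IH i j (leq_trans (ltn_ord i) ha).
have [_ [_ s1]] := Hp a.
rewrite -s1; apply: ler_sum => i _; rewrite -(Zr i (ltn_ord i)); apply: ler_sum => j _.
have [h1 h2] := IH i j (leq_trans (ltn_ord i) ha).
by rewrite -[X in _ <= X]mulr1; apply: ler_wpM2l.
Qed.

Lemma Ddiag (R : realType) (pi D : nat -> nat -> R) : prob_seq pi -> is_d pi D ->
  forall a, D a a = 0.
Proof.
move=> Hp Hd; have [D00 _] := Hd.
elim/ltn_ind => [[|m] IH] //.
apply/eqP; rewrite eq_le (proj1 (Dbnd Hp Hd _ _)) andbT.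
have pi0 : forall i, 0 <= pi m i by move=> i; have [] := Hp m.
apply: (le_trans (Dmin Hd (Z := fun i j => if j == i then pi m i else 0) _)).
  split; first by move=> i j; case: ifP.
  split; first by move=> i hi; rewrite sum_pick.
  move=> j hj; rewrite (eq_bigr (fun i : 'I_m.+1 => if (i:nat) == j then pi m i else 0)).
    by rewrite sum_pickF.
  by move=> i _; rewrite eq_sym; case: eqP => // ->.
rewrite /costf big1 // => i _.
rewrite (eq_bigr (fun j : 'I_m.+1 => if (j:nat) == i then pi m i * D i j else 0)); last first.
  by move=> j _; case: ifP => _; rewrite ?mul0r.
by rewrite (@sum_pickF _ _ _ (fun j => pi m i * D i j) (ltn_ord i)) /= IH ?mulr0.
Qed.

Lemma glue (R : realType) M K N (mu nu rho : nat -> R) x y (f : nat -> nat -> R) :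
  coup M K mu nu x -> coup K N nu rho y ->
  (forall i j l, (i < M)%N -> (j < K)%N -> (l < N)%N -> f i l <= f i j + f j l) ->
  exists w, coup M N mu rho w /\ costf M N f w <= costf M K f x + costf K N f y.
Proof.
case=> [x0 [xr xc]] [y0 [yr yc]] tri.
have nu0 : forall j, (j < K)%N -> 0 <= nu j by move=> j hj; rewrite -xc //; apply: sumr_ge0.
have xK : forall i j, (i < M)%N -> (j < K)%N -> x i j / nu j * nu j = x i j.
  move=> i j hi hj; apply: divKeq => h.
  by apply: (sum0_term (M := M) (F := fun i => x i j)) => //; rewrite xc.
have yK : forall j l, (j < K)%N -> (l < N)%N -> y j l / nu j * nu j = y j l.
  move=> j l hj hl; apply: divKeq => h.
  by apply: (sum0_term (M := N) (F := fun l => y j l)) => //; rewrite yr.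
exists (fun i l => \sum_(j < K) x i j * y j l / nu j); split; first split; [|split|].
- move=> i l; apply: sumr_ge0 => j _; apply: divr_ge0; [exact: mulr_ge0|exact: nu0].
- move=> i hi; rewrite exchange_big /= -(xr i hi); apply: eq_bigr => j _.
  rewrite (eq_bigr (fun l : 'I_N => x i j / nu j * y j l)); last by move=> l _; ring.
  by rewrite -big_distrr /= yr // xK.
- move=> l hl; rewrite exchange_big /= -(yc l hl); apply: eq_bigr => j _.
  rewrite (eq_bigr (fun i : 'I_M => y j l / nu j * x i j)); last by move=> i _; ring.
  by rewrite -big_distrr /= xc // yK.
- rewrite /costf.
  apply: (le_trans (y := \sum_(i < M) \sum_(l < N) \sum_(j < K)
           (x i j * y j l / nu j * f i j + x i j * y j l / nu j * f j l))).
    apply: ler_sum => i _; apply: ler_sum => l _; rewrite big_distrl /=.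
    apply: ler_sum => j _; rewrite -mulrDr; apply: ler_wpM2l; last by apply: tri.
    by apply: divr_ge0; [exact: mulr_ge0|exact: nu0].
  have e1 : \sum_(i < M) \sum_(l < N) \sum_(j < K) x i j * y j l / nu j * f i j = costf M K f x.
    rewrite /costf; apply: eq_bigr => i _; rewrite exchange_big /=; apply: eq_bigr => j _.
    rewrite (eq_bigr (fun l : 'I_N => x i j * f i j / nu j * y j l)); last by move=> l _; ring.
    rewrite -big_distrr /= yr //.
    have -> : x i j * f i j / nu j * nu j = x i j / nu j * nu j * f i j by ring.
    by rewrite xK.
  have e2 : \sum_(i < M) \sum_(l < N) \sum_(j < K) x i j * y j l / nu j * f j l = costf K N f y.
    rewrite /costf exchange_big /=.
    under eq_bigr do rewrite exchange_big /=.
    rewrite exchange_big /=; apply: eq_bigr => j _; apply: eq_bigr => l _.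
    rewrite (eq_bigr (fun i : 'I_M => y j l * f j l / nu j * x i j)); last by move=> i _; ring.
    rewrite -big_distrr /= xc //.
    have -> : y j l * f j l / nu j * nu j = y j l / nu j * nu j * f j l by ring.
    by rewrite yK.
  rewrite /costf in e1 e2; rewrite -e1 -e2 -big_split /=; apply: ler_sum => i _.
  rewrite -big_split /=; apply: ler_sum => l _.
  by rewrite -big_split.
Qed.

Lemma Dtri (R : realType) (pi D : nat -> nat -> R) : prob_seq pi -> is_d pi D ->
  forall a b c, D a c <= D a b + D b c.
Proof.
move=> Hp Hd; have [D00 [D0j _]] := Hd.
have bnd := Dbnd Hp Hd.
suff : forall N a b c, (a + b + c <= N)%N -> D a c <= D a b + D b c.
  by move=> h a b c; exact: (h _ a b c (leqnn _)).
elim=> [|N IH] [|a] [|b] [|c] habc;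
  rewrite ?D00 ?(D0j a).1 ?(D0j a).2 ?(D0j b).1 ?(D0j b).2 ?(D0j c).1 ?(D0j c).2;
  try (by have [h1 h2] := bnd a.+1 b.+1; have [h3 h4] := bnd b.+1 c.+1; have [h5 h6] := bnd a.+1 c.+1; lra);
  try (by have [h1 h2] := bnd a.+1 b.+1; lra);
  try (by have [h1 h2] := bnd b.+1 c.+1; lra);
  try (by have [h1 h2] := bnd a.+1 c.+1; lra);
  try lra; try (by move: habc; rewrite !addSn).
have tri : forall i j l, (i < a.+1)%N -> (j < b.+1)%N -> (l < c.+1)%N -> D i l <= D i j + D j l.
  by move=> i j l hi hj hl; apply: IH; lia.
have [x [cx ex]] := Dopt Hd a b.
have [y [cy ey]] := Dopt Hd b c.
have [w [cw ew]] := glue cx cy tri.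
rewrite -ex -ey; exact: (le_trans (Dmin Hd cw) ew).
Qed.

Lemma Hmono (R : realType) (pi : nat -> nat -> R) : condH pi ->
  forall j k l, (j <= k)%N -> (k <= l)%N -> pi l j <= pi k j.
Proof.
move=> HH j k l hjk; elim: l => [|l IHl]; first by rewrite leqn0 => /eqP ->.
rewrite leq_eqVlt => /orP [/eqP ->|hkl]; first by [].
apply: le_trans (IHl hkl); have [_ h] := HH l.+1 isT.
by have /andP [] := h j (leq_ltn_trans hjk hkl).
Qed.

Lemma partA (R : realType) (pi D : nat -> nat -> R) : prob_seq pi -> condH pi -> is_d pi D ->
  forall n m, (m <= n)%N -> D m.+1 n.+1 <= D m n.+1.
Proof.
move=> Hp HH Hd; have [D00 [D0j _]] := Hd.
have bnd := Dbnd Hp Hd.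
elim/ltn_ind => n IHA [|m] hmn.
  by rewrite (D0j n).1; have [] := bnd 1%N n.+1.
have chain : forall k mm j', (j' < n)%N -> (k <= mm)%N -> (mm <= j'.+1)%N -> D mm j'.+1 <= D k j'.+1.
  move=> k mm j' hj'; elim: mm => [|x IHx]; first by rewrite leqn0 => /eqP ->.
  rewrite leq_eqVlt => /orP [/eqP ->|hk] hx; first by [].
  apply: le_trans (IHx hk (ltnW hx)).
  by apply: IHA.
have pi0 : forall k i, 0 <= pi k i by move=> k i; have [] := Hp k.
have [Z0 [c0 e0]] := Dopt Hd m n.
have [Z1 [c1 [k1 cl1]]] := df_all (s := m.+1) c0 (leqnn _) (ltnW (leq_trans hmn (ltnSn n)))
   (fun j hj => Hmono HH (ltnSE hj) (ltnW hmn)) (fun k l => proj1 (bnd k l))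
   (fun j _ => Ddiag Hp Hd j) (fun k l j _ _ _ => Dtri Hp Hd k j l).
pose del i := pi m i - pi m.+1 i.
have hdel : forall i, (i < m.+1)%N -> 0 <= del i /\ del i <= \sum_(l < n.+1 | (m.+1 <= l)%N) Z1 i l.
  move=> i hi; split.
    by rewrite /del subr_ge0; have [_ h] := HH m.+1 isT; have /andP [] := h i hi.
  have hsN : (m.+1 <= n.+1)%N by apply: ltnW.
  have := offdiag_ge c1 hsN cl1 hi hi.
  apply: le_trans.
  by have h := @Hmono _ _ HH i m.+1 n (ltnW hi) hmn; rewrite /del; lra.
have fle : forall k j, (k < m.+1)%N -> (m.+1 <= j)%N -> (j < n.+1)%N -> D m.+1 j <= D k j.
  move=> k j hk hj1 hj2.
  case: j hj1 hj2 => [|j'] //= hj1 hj2.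
  by apply: chain => //; apply: ltnW.
have [Z2 [c2 k2]] := opA c1 hdel (fun k l => proj1 (bnd k l)) fle.
have c2' : coup m.+2 n.+1 (pi m.+1) (pi n) Z2.
  apply: coup_ext c2 => //.
  move=> i; rewrite ltnS leq_eqVlt => /orP [/eqP ->|hi]; last by rewrite hi /del opprB addrC subrK.
  rewrite ltnn /del sumrB; have [_ [_ s1]] := Hp m; have [_ [_ s2]] := Hp m.+1.
  rewrite s1; move: s2; rewrite big_ord_recr /= => s2; lra.
apply: le_trans (Dmin Hd c2') _.
by rewrite -e0; apply: le_trans k2 k1.
Qed.

Lemma partB (R : realType) (pi D : nat -> nat -> R) : prob_seq pi -> condH pi -> is_d pi D ->
  forall b a, (a <= b)%N -> D a b <= D a b.+1.
Proof.
move=> Hp HH Hd; have [D00 [D0j _]] := Hd.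
have bnd := Dbnd Hp Hd.
have pi0 : forall k i, 0 <= pi k i by move=> k i; have [] := Hp k.
elim/ltn_ind => b IHB [|m] hab.
  by case: b {IHB hab} => [|b]; rewrite ?D00 !(D0j _).1 ?ler01.
case: b IHB hab => [|n] IHB // hmn.
have chain : forall i j q, (i <= j)%N -> (j <= q)%N -> (q <= n.+1)%N -> D i j <= D i q.
  move=> i j q hij; elim: q => [|q IHq]; first by rewrite leqn0 => /eqP ->.
  rewrite leq_eqVlt => /orP [/eqP ->|hjq] hq; first by [].
  apply: le_trans (IHq hjq (ltnW hq)) _.
  by apply: IHB; lia.
have [Z0 [c0 e0]] := Dopt Hd m n.+1.
have hsN : (m.+1 <= n.+2)%N by lia.
have [Z1 [c1 [k1 cl1]]] := df_all (s := m.+1) c0 (leqnn _) hsN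
   (fun j hj => Hmono HH (ltnSE hj) (leq_trans hmn (leqnSn _))) (fun k l => proj1 (bnd k l))
   (fun j _ => Ddiag Hp Hd j) (fun k l j _ _ _ => Dtri Hp Hd k j l).
pose del i := pi n i - pi n.+1 i.
have hdel : forall i, (i < m.+1)%N -> 0 <= del i /\ del i <= \sum_(l < n.+2 | (m.+1 <= l)%N) Z1 i l.
  move=> i hi; split.
    rewrite /del subr_ge0; have [_ h] := HH n.+1 isT.
    by have /andP [] := h i (leq_trans hi hmn).
  have := offdiag_ge c1 hsN cl1 hi hi.
  apply: le_trans.
  by have h := @Hmono _ _ HH i m n (ltnSE hi) (ltnSE hmn); rewrite /del; lra.
have [Z2 [c2 k2]] := opB1 c1 hsN hdel (fun k l => proj1 (bnd k l)) (fun i _ => Ddiag Hp Hd i).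
set nu1 := (fun j => _) in c2.
have nu1le : forall j, (j < n.+1)%N -> nu1 j <= pi n j.
  move=> j hj; rewrite /nu1; case: ifP => hjm; first by rewrite /del addrC subrK.
  have [Z10 [_ Z1c]] := c1.
  apply: (le_trans (y := \sum_(i < m.+1) Z1 i j)).
    apply: ler_sum => i _; rewrite -[X in _ <= X]mul1r; apply: ler_wpM2r => //.
    rewrite lerBlDr lerDl; apply: divr_ge0; first exact: (proj1 (hdel i (ltn_ord i))).
    by apply: sumr_ge0.
  rewrite Z1c; last lia.
  by have [_ h] := HH n.+1 isT; have /andP [] := h j hj.
have bal : \sum_(j < n.+1) pi n j = \sum_(j < n.+2) nu1 j.
  rewrite (coup_total c2); have [_ [_ ->]] := Hp n; have [_ [_ ->]] := Hp m; by [].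
have fle : forall i j, (i < m.+1)%N -> (j < n.+1)%N -> nu1 j != pi n j -> D i j <= D i n.+1.
  move=> i j hi hj; rewrite /nu1; case: ifP => hjm.
    by rewrite /del addrC subrK eqxx.
  move=> _; have hjm' : (m.+1 <= j)%N by rewrite leqNgt hjm.
  by apply: chain; lia.
have [Z3 [c3 k3]] := opB2 c2 nu1le bal (fun k l => proj1 (bnd k l)) fle.
apply: le_trans (Dmin Hd c3) _.
by rewrite -e0; apply: le_trans k3 (le_trans k2 k1).
Qed.

Theorem theorem4 (R : realType) (pi : nat -> nat -> R) (D : nat -> nat -> R) :
  prob_seq pi -> pairwise_distinct pi -> condH pi -> is_d pi D ->
  (* for 0 <= m <= n : d_{m,n} <= d_{m-1,n} *)
  (forall m n : nat, (m <= n)%N -> D m.+1 n.+1 <= D m n.+1) /\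
  (* for -1 <= m <= n : d_{m,n} <= d_{m,n+1}  (here a = m+1, b = n+1) *)
  (forall a b : nat, (a <= b)%N -> D a b <= D a b.+1).
Proof.
move=> Hp _ HH Hd; split.
  by move=> m n hmn; apply: partA.
by move=> a b hab; apply: partB.
Qed.
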